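(* Let $\mathcal P$ be a σ-convex, pre-Hahn-localizable family of probability measures on $(\Omega,\mathcal F)$, with localization $\mathcal Q$ and supports $\{S_Q\}_{Q\in\mathcal Q}$. The following are equivalent: (1) $\mathcal P$ is Hahn-localizable (with respect to $\mathcal Q$ and $\{S_Q\}$); (2) $\mathbb L^\infty(\mathcal P)$, ordered by $f\le g$ iff $f\le g$ $\mathcal P$-q.s., is Dedekind complete; (3) for every $\mathcal P$-q.s. uniformly bounded family $\{g_Q\}_{Q\in\mathcal Q}$ of non-negative $\mathcal F$-measurable functions with $g_Q=0$ $\mathcal P$-q.s. on $\Omega\setminus S_Q$, there is $g\in\mathcal L^\infty(\mathcal P)$ with $g\mathbf 1_{S_Q}=g_Q\mathbf 1_{S_Q}$ $\mathcal P$-q.s. for every $Q\in\mathcal Q$.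
   Context: $\mathcal P$ is σ-convex if it is closed under countable convex combinations. A set is $\mathcal P$-polar if contained in some $N\in\mathcal F$ with $P(N)=0$ for all $P\in\mathcal P$; $\mathcal P$-q.s. means outside a polar set. $\mathcal L^\infty(\mathcal P)$ is the set of $\mathcal F$-measurable real functions bounded $\mathcal P$-q.s.; $\mathbb L^\infty(\mathcal P)$ is its quotient by $\mathcal P$-q.s. equality. Dedekind complete: every nonempty subset bounded above has a least upper bound. $\mathcal P\lll\mathcal Q$ means each $P\in\mathcal P$ is absolutely continuous w.r.t. some $Q\in\mathcal Q$; $\mathrm{sconv}(\mathcal Q)$ denotes countable convex combinations. $\mathcal P$ is pre-Hahn-localizable with localization $\mathcal Q$ (probability measures on $\mathcal F$) and supports $S_Q\in\mathcal F$ if $Q(S_R)=\delta_{QR}$ for $Q,R\in\mathcal Q$ and $\mathcal Q\lll\mathcal P\lll\mathrm{sconv}(\mathcal Q)$. It is Hahn-localizable (w.r.t. $\mathcal Q$, $\{S_Q\}$) if for every family $E_Q\in\mathcal F$, $E_Q\subseteq S_Q$, there is $S\in\mathcal F$ with $Q(E_Q\setminus S)=0$ for all $Q\in\mathcal Q$, and such that any $F\in\mathcal F$ with $Q(E_Q\setminus F)=0$ for all $Q$ satisfies $Q(S\setminus F)=0$ for all $Q$. *)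

(* Defs.v *)
From HB Require Import structures.
From mathcomp Require Import all_boot all_order all_algebra.
From mathcomp Require Import all_classical all_reals all_analysis.
Set Implicit Arguments. Unset Strict Implicit. Unset Printing Implicit Defensive.
Import Order.TTheory GRing.Theory Num.Theory.
Local Open Scope classical_set_scope.
Local Open Scope ring_scope.

Section Defs.
Context {d : measure_display} {T : measurableType d} {R : realType}.

Definition cc_weights (a : nat -> R) : Prop :=
  (forall n, 0 <= a n) /\ (\sum_(n <oo) (a n)%:E = 1)%E.

Definition is_ccomb (mu : set T -> \bar R) (Pn : nat -> probability T R)
  (a : nat -> R) : Prop :=
  forall A, measurable A -> mu A = (\sum_(n <oo) ((a n)%:E * Pn n A))%E.

Definition sigma_convex (Fam : set (probability T R)) : Prop :=
  forall (Pn : nat -> probability T R) (a : nat -> R),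
    (forall n, Fam (Pn n)) -> cc_weights a ->
    exists P' : probability T R, Fam P' /\ is_ccomb P' Pn a.

Definition sconv (Qs : set (probability T R)) : set (set T -> \bar R) :=
  [set mu | exists (Qn : nat -> probability T R) (a : nat -> R),
     (forall n, Qs (Qn n)) /\ cc_weights a /\ is_ccomb mu Qn a].

Definition abs_cont (mu nu : set T -> \bar R) : Prop :=
  forall A, measurable A -> nu A = 0%E -> mu A = 0%E.

Definition pre_hahn_localizable (Fam Qs : set (probability T R))
  (S : probability T R -> set T) : Prop :=
  (forall Q, Qs Q -> measurable (S Q)) /\
  (forall Q Q', Qs Q -> Qs Q' ->
     (Q = Q' -> Q (S Q') = 1%E) /\ (Q <> Q' -> Q (S Q') = 0%E)) /\
  (forall Q, Qs Q -> exists P, Fam P /\ abs_cont Q P) /\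
  (forall P, Fam P -> exists mu, sconv Qs mu /\ abs_cont P mu).

Definition polar (Fam : set (probability T R)) (N : set T) : Prop :=
  exists M, measurable M /\ N `<=` M /\ forall P, Fam P -> P M = 0%E.

Definition qs (Fam : set (probability T R)) (p : T -> Prop) : Prop :=
  polar Fam [set x | ~ p x].

Definition Linf (Fam : set (probability T R)) (f : T -> R) : Prop :=
  measurable_fun setT f /\ exists c : R, qs Fam (fun x => `|f x| <= c).

(* Dedekind completeness of \mathbb L^\infty(Fam) with the q.s. order,
   stated on representatives *)
Definition Linf_dedekind_complete (Fam : set (probability T R)) : Prop :=
  forall A : set (T -> R), A `<=` Linf Fam -> A !=set0 ->
    (exists h, Linf Fam h /\ forall f, A f -> qs Fam (fun x => f x <= h x)) ->
    exists g, Linf Fam g /\ (forall f, A f -> qs Fam (fun x => f x <= g x)) /\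
      (forall h, Linf Fam h -> (forall f, A f -> qs Fam (fun x => f x <= h x)) ->
         qs Fam (fun x => g x <= h x)).

Definition hahn_localizable (Qs : set (probability T R))
  (S : probability T R -> set T) : Prop :=
  forall E : probability T R -> set T,
    (forall Q, Qs Q -> measurable (E Q) /\ E Q `<=` S Q) ->
    exists S0, measurable S0 /\
      (forall Q, Qs Q -> Q (E Q `\` S0) = 0%E) /\
      (forall F, measurable F -> (forall Q, Qs Q -> Q (E Q `\` F) = 0%E) ->
         forall Q, Qs Q -> Q (S0 `\` F) = 0%E).

Definition gluing_property (Fam Qs : set (probability T R))
  (S : probability T R -> set T) : Prop :=
  forall g : probability T R -> T -> R,
    (forall Q, Qs Q -> measurable_fun setT (g Q) /\ forall x, 0 <= g Q x) ->
    (exists c : R, forall Q, Qs Q -> qs Fam (fun x => g Q x <= c)) ->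
    (forall Q, Qs Q -> qs Fam (fun x => ~ S Q x -> g Q x = 0)) ->
    exists g0, Linf Fam g0 /\
      forall Q, Qs Q ->
        qs Fam (fun x => g0 x * \1_(S Q) x = g Q x * \1_(S Q) x).

End Defs.

(* Main.v *)
Require Import Defs.
From mathcomp Require Import all_boot all_order all_algebra.
From mathcomp Require Import all_classical all_reals all_analysis.
From mathcomp Require Import measurable_realfun lra.
Set Implicit Arguments. Unset Strict Implicit. Unset Printing Implicit Defensive.
Import Order.TTheory GRing.Theory Num.Theory.

Module Helpers.
Local Open Scope classical_set_scope.
Local Open Scope ring_scope.

Section Basics.
Context {d : measure_display} {T : measurableType d} {R : realType}.
Implicit Types (Q : probability T R) (f g : T -> R).

Lemma mset_lt f g : measurable_fun setT f -> measurable_fun setT g ->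
  measurable [set x | f x < g x].
Proof.
move=> mf mg.
have -> : [set x | f x < g x] = [set: T] `&` (fun x => f x < g x) @^-1` [set true].
  by apply/seteqP; split => x /=; [move=> ->|case].
exact: measurable_fun_ltr.
Qed.

Lemma mset_neq f g : measurable_fun setT f -> measurable_fun setT g ->
  measurable [set x | f x <> g x].
Proof.
move=> mf mg.
have -> : [set x | f x <> g x] = [set: T] `&` (fun x => f x == g x) @^-1` [set false].
  apply/seteqP; split => x /=; first by move=> /eqP/negbTE.
  by case=> _ /negbT/eqP.
exact: measurable_fun_eqr.
Qed.

Lemma negl_meas0 Q M : measurable M -> Q.-negligible M -> Q M = 0%E.
Proof. by move=> mM [A [mA QA MA]]; exact: (subset_measure0 mM mA MA QA). Qed.

Lemma meas0_negl Q M : measurable M -> Q M = 0%E -> Q.-negligible M.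
Proof. by move=> mM QM; exists M; split. Qed.

Lemma neglS Q A B : A `<=` B -> Q.-negligible B -> Q.-negligible A.
Proof. by move=> AB [M [mM QM BM]]; exists M; split => //; exact: subset_trans BM. Qed.

Lemma neglU Q A B : Q.-negligible A -> Q.-negligible B -> Q.-negligible (A `|` B).
Proof.
move=> [M [mM QM AM]] [N [mN QN BN]]; exists (M `|` N); split.
- exact: measurableU.
- exact: null_set_setU.
- by move=> x [/AM|/BN] ?; [left|right].
Qed.

End Basics.

Section Lev.
Context {d : measure_display} {T : measurableType d} {R : realType}.

Definition qlev (n : nat) : R := if @unpickle rat n is Some q then ratr q else 0.
Definition rlev (c : R) n : R := Num.min (Num.max (qlev n) 0) c.
Definition lterm (c : R) (D : nat -> set T) (x : T) n : R := rlev c n * \1_(D n) x.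
Definition lev (c : R) (D : nat -> set T) (x : T) : R := sup (range (lterm c D x)).

Variable c : R.
Hypothesis c0 : 0 <= c.

Lemma rlev_ge0 n : 0 <= rlev c n.
Proof. by rewrite /rlev le_min c0 le_max lexx orbT. Qed.

Lemma rlev_le n : rlev c n <= c.
Proof. by rewrite /rlev ge_min lexx orbT. Qed.

Lemma rlev_dense y z : 0 <= y -> y < z -> z <= c -> exists n, y < rlev c n < z.
Proof.
move=> y0 yz zc; have [q] := rat_in_itvoo yz; rewrite in_itv /= => /andP[yq qz].
exists (pickle q); rewrite /rlev /qlev pickleK.
have q0 : 0 <= ratr q :> R by apply: le_trans y0 (ltW yq).
have qc : ratr q <= c by apply: le_trans (ltW qz) zc.
by rewrite (max_l q0) (min_l qc) yq qz.
Qed.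

Lemma lterm_in D x n : D n x -> lterm c D x n = rlev c n.
Proof. by move=> Dx; rewrite /lterm indicE mem_set // mulr1. Qed.

Lemma lterm_out D x n : ~ D n x -> lterm c D x n = 0.
Proof. by move=> Dx; rewrite /lterm indicE memNset // mulr0. Qed.

Lemma lterm_ge0 D x n : 0 <= lterm c D x n.
Proof.
have [Dx|Dx] := pselect (D n x); first by rewrite lterm_in // rlev_ge0.
by rewrite lterm_out.
Qed.

Lemma lterm_le D x n : lterm c D x n <= c.
Proof.
have [Dx|Dx] := pselect (D n x); first by rewrite lterm_in // rlev_le.
by rewrite lterm_out.
Qed.

Lemma lev_hasub D x : has_ubound (range (lterm c D x)).
Proof. by exists c => _ [n _ <-]; exact: lterm_le. Qed.

Lemma lev_ub D x n : lterm c D x n <= lev c D x.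
Proof. by apply: ub_le_sup; [exact: lev_hasub | exists n]. Qed.

Lemma lev_ge0 D x : 0 <= lev c D x.
Proof. exact: le_trans (lterm_ge0 D x 0) (lev_ub D x 0). Qed.

Lemma lev_le y D x : 0 <= y -> (forall n, D n x -> rlev c n <= y) -> lev c D x <= y.
Proof.
move=> y0 H; apply: ge_sup; first by exists (lterm c D x 0), 0%N.
move=> _ [n _ <-]; have [Dx|Dx] := pselect (D n x).
  by rewrite lterm_in //; exact: H.
by rewrite lterm_out.
Qed.

Lemma lev_lec D x : lev c D x <= c.
Proof. by apply: lev_le => // n _; exact: rlev_le. Qed.

Lemma lev_ge y D x : 0 <= y -> y <= c -> (forall n, rlev c n < y -> D n x) ->
  y <= lev c D x.
Proof.
move=> y0 yc H; rewrite leNgt; apply/negP => ly.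
have [n /andP[l1 l2]] := rlev_dense (lev_ge0 D x) ly yc.
have := lev_ub D x n; rewrite lterm_in; last exact: H.
by rewrite leNgt l1.
Qed.

Lemma lev_meas D : (forall n, measurable (D n)) -> measurable_fun setT (lev c D).
Proof.
move=> mD.
have -> : lev c D = fun x => sups (lterm c D x) 0.
  apply/funext => x; rewrite /lev /sups /=; congr sup.
  by apply/seteqP; split => _ [n _ <-]; exists n.
apply: measurable_fun_sups => //.
by move=> x _; exact: lev_hasub.
by move=> n; apply: measurable_funM => //; exact: measurable_indic.
Qed.

End Lev.

Lemma exists_inv_lt (R : realType) (e : R) : 0 < e -> exists m : nat, m.+1%:R^-1 < e.
Proof.
move=> e0; exists (Num.Def.archi_bound e^-1).
have ie : 0 <= e^-1 by rewrite invr_ge0 ltW.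
have := archi_boundP ie => h.
rewrite -[X in _ < X](invrK e) ltf_pV2 ?posrE ?invr_gt0 //.
by apply: lt_le_trans h _; rewrite ler_nat.
Qed.

Section EU.
Context {d : measure_display} {T : measurableType d} {R : realType}.


Lemma ess_union (Q : probability T R) (I : Type) (P : I -> Prop) (i0 : I)
  (B : I -> set T) : P i0 -> (forall i, P i -> measurable (B i)) ->
  exists j : nat -> I, (forall k, P (j k)) /\
    forall i, P i -> Q.-negligible (B i `\` \bigcup_k B (j k)).
Proof.
move=> Pi0 mB.
pose V := [set Q (\bigcup_k B (j k)) | j in [set j : nat -> I | forall k, P (j k)]].
pose s := ereal_sup V.
have mU (j : nat -> I) : (forall k, P (j k)) -> measurable (\bigcup_k B (j k)).
  by move=> Pj; apply: bigcup_measurable => k _; exact: mB.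
have s_le1 : (s <= 1)%E.
  by apply: ge_ereal_sup => _ [j Pj <-]; apply: probability_le1; exact: mU.
have s_ge0 : (0 <= s)%E.
  apply: le_ereal_sup_tmp; exists (Q (\bigcup_(k : nat) B i0)) => //.
  by exists (fun=> i0).
have sfin : s \is a fin_num by rewrite ge0_fin_numE // (le_lt_trans s_le1) // ltey.
have hJ : forall m : nat, exists j : nat -> I, (forall k, P (j k)) /\
    (s - (m.+1%:R^-1)%:E < Q (\bigcup_k B (j k)))%E.
  move=> m; have : (s - (m.+1%:R^-1)%:E < s)%E by rewrite gte_subl // lte_fin invr_gt0.
  by move/ereal_sup_gt => [_ [j Pj <-] h]; exists j.
have [J HJ] := choice hJ.
pose js (n : nat) : I := if @unpickle (nat * nat)%type n is Some (m, k) then J m k else i0.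
have Pjs k : P (js k) by rewrite /js; case: (unpickle k) => [[m k']|] //; case: (HJ m).
pose U := \bigcup_n B (js n).
have mUU : measurable U := mU _ Pjs.
have hsub m : \bigcup_k B (J m k) `<=` U.
  by move=> x [k _ Bx]; exists (pickle (m, k)) => //; rewrite /js pickleK.
have QU_ge : (s <= Q U)%E.
  apply/lee_addgt0Pr => e e0; have [m me] := exists_inv_lt e0.
  have [PJ hm] := HJ m.
  have : (s < Q U + (m.+1%:R^-1)%:E)%E.
    rewrite -lteBlDr //; apply: lt_le_trans hm _.
    by apply: le_measure; rewrite ?inE //; exact: mU.
  move=> h; apply/ltW; apply: lt_le_trans h _; rewrite leeD2l ?lee_fin ?ltW //.
have QUfin : Q U \is a fin_num.
  by rewrite ge0_fin_numE ?measure_ge0 // (le_lt_trans (probability_le1 _ mUU)) // ltey.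
exists js; split => // i Pi.
have mBU : measurable (B i `\` U) by apply: measurableD => //; exact: mB.
apply: meas0_negl => //.
apply/eqP; rewrite eq_le measure_ge0 andbT leNgt; apply/negP => hpos.
pose j' (n : nat) : I := if n is n'.+1 then js n' else i.
have Pj' k : P (j' k) by case: k.
have eqU : \bigcup_k B (j' k) = U `|` (B i `\` U).
  apply/seteqP; split => x.
    case=> -[|k] _ /= Bx; last by left; exists k.
    by have [Ux|Ux] := pselect (U x); [left|right].
  by case=> [[k _ Bx]|[Bx _]]; [exists k.+1 | exists 0%N].
have : (Q (\bigcup_k B (j' k)) <= s)%E by apply: ereal_sup_ubound; exists j'.
rewrite eqU measureU //; last by rewrite setDE setICA setICr setI0.
apply/negP; rewrite -ltNge; apply: le_lt_trans QU_ge _.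
by rewrite lteDl.
Qed.
End EU.

Section Clip.
Context {R : realType}.
Definition clip (a b y : R) := Num.min (Num.max y (- a)) b + a.
Variables (a b : R).
Hypotheses (a0 : 0 <= a) (b0 : 0 <= b).

Lemma clip_ge0 y : 0 <= clip a b y.
Proof.
rewrite /clip -lerBlDr sub0r le_min le_max lexx orbT /=.
by apply: le_trans b0; rewrite oppr_le0.
Qed.

Lemma clip_le y : clip a b y <= b + a.
Proof. by rewrite /clip lerD2r ge_min lexx orbT. Qed.

Lemma clip_C1 y : y <= b -> y <= clip a b y - a.
Proof. by move=> yb; rewrite /clip addrK le_min le_max lexx yb. Qed.

Lemma clip_C2 y z : - a <= z -> y <= z -> clip a b y - a <= z.
Proof. by move=> az yz; rewrite /clip addrK ge_min ge_max az yz. Qed.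
End Clip.

Section Main.
Context {d : measure_display} {T : measurableType d} {R : realType}.
Variables (Fam Qs : set (probability T R)) (S : probability T R -> set T).
Hypothesis hP : pre_hahn_localizable Fam Qs S.

Lemma mS Q : Qs Q -> measurable (S Q).
Proof. by case: hP => h _; exact: h. Qed.

Lemma QS1 Q : Qs Q -> Q (S Q) = 1%E.
Proof. by case: hP => _ [h _] HQ; case: (h Q Q HQ HQ) => ->. Qed.

Lemma QS0 Q Q' : Qs Q -> Qs Q' -> Q <> Q' -> Q (S Q') = 0%E.
Proof. by case: hP => _ [h _] HQ HQ' QQ; case: (h Q Q' HQ HQ') => _ ->. Qed.

Lemma QnS Q : Qs Q -> Q (~` S Q) = 0%E.
Proof. by move=> HQ; rewrite probability_setC; [rewrite QS1 // subee | exact: mS]. Qed.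

Lemma polar_of M : measurable M -> (forall Q, Qs Q -> Q M = 0%E) -> polar Fam M.
Proof.
move=> mM HM; exists M; split => //; split => // P FP.
case: hP => _ [_ [_ h]]; have [mu [[Qn [a [HQ [_ hc]]]] hac]] := h P FP.
apply: hac => //; rewrite hc //; apply: eseries0 => n _ _.
by rewrite HM // mule0.
Qed.

Lemma polar_Q N Q : polar Fam N -> Qs Q -> Q.-negligible N.
Proof.
move=> [M [mM [NM HM]]] HQ; case: hP => _ [_ [h _]].
have [P [FP hac]] := h Q HQ.
by exists M; split => //; apply: hac => //; exact: HM.
Qed.

Lemma negl_SS Q Q' A : Qs Q -> Qs Q' -> Q <> Q' -> A `<=` S Q -> Q'.-negligible A.
Proof.
move=> HQ HQ' QQ AS; exists (S Q); split => //; first exact: mS.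
by apply: QS0 => // eq; apply: QQ.
Qed.

Lemma negl_nS Q A : Qs Q -> A `<=` ~` S Q -> Q.-negligible A.
Proof.
move=> HQ AS; exists (~` S Q); split => //; last exact: QnS.
by apply: measurableC; exact: mS.
Qed.

Lemma qs_of (p : T -> Prop) M : measurable M -> [set x | ~ p x] `<=` M ->
  (forall Q, Qs Q -> Q.-negligible (M `&` S Q)) -> qs Fam p.
Proof.
move=> mM pM HM.
have : polar Fam M.
  apply: polar_of => // Q HQ; apply: negl_meas0 => //.
  apply: (@neglS _ _ _ _ _ ((M `&` S Q) `|` ~` S Q)); last first.
    by apply: neglU; [exact: HM | exact: negl_nS].
  by move=> x Mx; have [Sx|Sx] := pselect (S Q x); [left|right].
by move=> [M' [mM' [MM' H]]]; exists M'; split => //; split => //; exact: subset_trans MM'.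
Qed.

Lemma qs_Q (p : T -> Prop) Q : qs Fam p -> Qs Q -> Q.-negligible [set x | ~ p x].
Proof. exact: polar_Q. Qed.

Lemma qs_all (p : T -> Prop) : (forall x, p x) -> qs Fam p.
Proof.
move=> H; apply: (@qs_of _ set0) => //.
  by move=> x /= /(_ (H x)).
by move=> Q _; rewrite set0I; exists set0; split.
Qed.

Lemma Linf_indic A : measurable A -> Linf Fam (\1_A).
Proof.
move=> mA; split; first exact: measurable_indic.
exists 1; apply: qs_all => x; rewrite indicE.
by case: (x \in A); rewrite ?normr1 ?normr0.
Qed.

Lemma Linf_cst (a : R) : Linf Fam (cst a).
Proof. by split => //; exists `|a|; apply: qs_all. Qed.

Lemma indic_le1 (A : set T) x : \1_A x <= 1 :> R.
Proof. by rewrite indicE; case: (x \in A). Qed.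

Lemma indic_ge0 (A : set T) x : 0 <= \1_A x :> R.
Proof. by rewrite indicE; case: (x \in A). Qed.

Lemma DC_hahn : Linf_dedekind_complete Fam -> hahn_localizable Qs S.
Proof.
move=> DC E HE.
have [[Q0 HQ0]|Qs0] := pselect (Qs !=set0); last first.
  exists set0; split => //; split => [Q HQ|F _ _ Q HQ]; exfalso; apply: Qs0; by exists Q.
pose A := [set f : T -> R | exists Q, Qs Q /\ f = \1_(E Q)].
have A_Linf : A `<=` Linf Fam.
  by move=> _ [Q [HQ ->]]; apply: Linf_indic; case: (HE Q HQ).
have hub : exists h, Linf Fam h /\ forall f, A f -> qs Fam (fun x => f x <= h x).
  exists (cst 1); split; first exact: Linf_cst.
  by move=> _ [Q [HQ ->]]; apply: qs_all => x; exact: indic_le1.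
have [g [Lg [gub gmin]]] := DC A A_Linf (ex_intro _ _ (ex_intro _ Q0 (conj HQ0 erefl))) hub.
have mg : measurable_fun setT g by case: Lg.
pose S0 := [set x | cst (1/2) x < g x].
have mS0 : measurable S0 by apply: mset_lt.
exists S0; split => //; split.
- move=> Q HQ; have [mE ES] := HE Q HQ.
  apply: negl_meas0; first exact: measurableD.
  apply: neglS (qs_Q (gub _ (ex_intro _ Q (conj HQ erefl))) HQ).
  move=> x [Ex nS0] /=; rewrite indicE mem_set //.
  move: nS0; rewrite /S0 /= => /negP; rewrite -leNgt => h1 h2.
  have := le_trans h2 h1; rewrite ler_pdivlMr //= mul1r.
  by move=> h; lra.
- move=> F mF HF Q HQ.
  have h1F : forall Q' : probability T R, Qs Q' -> qs Fam (fun x => (\1_(E Q') x : R) <= \1_F x).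
    move=> Q' HQ'; have [mE ES] := HE Q' HQ'.
    apply: (@qs_of _ (E Q' `\` F)); first exact: measurableD.
      move=> x /= h; split.
        apply/not_notP => Ex; apply: h; rewrite [X in X <= _]indicE memNset //; exact: indic_ge0.
      move=> Fx; apply: h; rewrite [X in _ <= X]indicE mem_set //; exact: indic_le1.
    move=> Q'' HQ''; have [<-|neq] := pselect (Q' = Q'').
      apply: neglS (meas0_negl (measurableD mE mF) (HF Q' HQ')).
      by move=> x [].
    by apply: (negl_SS HQ' HQ'' neq) => x [[/ES]].
  have := gmin (\1_F) (Linf_indic mF) (fun f '(ex_intro Q' (conj HQ' e)) => ltac:(rewrite e; exact: h1F)).
  move=> qg; apply: negl_meas0; first exact: measurableD.
  apply: neglS (qs_Q qg HQ) => x [S0x Fx] /= h.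
  move: h; rewrite indicE memNset // => h; move: S0x; rewrite /S0 /= => h'.
  have := lt_le_trans h' h; rewrite ltNge => /negP; apply.
  by rewrite divr_ge0.
Qed.

Lemma hahn_glue : hahn_localizable Qs S -> gluing_property Fam Qs S.
Proof.
move=> HL g Hg [c Hc] _.
pose c' := Num.max c 0.
have c'0 : 0 <= c' by rewrite le_max lexx orbT.
have cc' : c <= c' by rewrite le_max lexx.
pose E n Q := S Q `&` [set x | cst (rlev c' n) x < g Q x].
have HE n : forall Q, Qs Q -> measurable (E n Q) /\ E n Q `<=` S Q.
  move=> Q HQ; split; last by move=> x [].
  by apply: measurableI; [exact: mS | apply: mset_lt => //; case: (Hg Q HQ)].
have [SS HS] := choice (fun n => HL (E n) (HE n)).
pose g0 := lev c' SS.
have mSS n : measurable (SS n) by case: (HS n).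
exists g0; split.
  split; first exact: lev_meas.
  exists c'; apply: qs_all => x; rewrite ger0_norm ?lev_ge0 //; exact: lev_lec.
move=> Q HQ; have [mgQ g0Q] := Hg Q HQ.
have mI : measurable_fun setT (\1_(S Q) : T -> R) by apply: measurable_indic; exact: mS.
apply: (@qs_of _ [set x | g0 x * \1_(S Q) x <> g Q x * \1_(S Q) x]).
- by apply: mset_neq; apply: measurable_funM => //; exact: lev_meas.
- by move=> x.
move=> Q' HQ'; have [<-|neq] := pselect (Q = Q'); last first.
  apply: (negl_SS HQ HQ' neq) => x [/= h _]; apply/not_notP => Sx; apply: h.
  by rewrite indicE memNset // !mulr0.
have N1 := qs_Q (Hc Q HQ) HQ.
have mEn n : measurable (E n Q) by case: (HE n Q HQ).
have N2 : Q.-negligible (\bigcup_n (E n Q `\` SS n)).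
  apply: negligible_bigcup => n; apply: meas0_negl; first exact: measurableD.
  by case: (HS n) => _ [h _]; exact: h.
have N3 : Q.-negligible (\bigcup_n (SS n `&` (S Q `\` E n Q))).
  apply: negligible_bigcup => n; have mX : measurable (S Q `\` E n Q).
    by apply: measurableD => //; exact: mS.
  apply: meas0_negl; first exact: measurableI.
  case: (HS n) => _ [_ h]; have := h (~` (S Q `\` E n Q)) (measurableC mX).
  have eqD (A B : set T) : A `\` ~` B = A `&` B by rewrite setDE setCK.
  move=> hh; rewrite -eqD; apply: hh => // Q'' HQ''.
  rewrite eqD; have [<-|neq] := pselect (Q = Q'').
    by rewrite setDE setICA setICr setI0 measure0.
  apply: negl_meas0; first by apply: measurableI => //; case: (HE n Q'' HQ'').
  by apply: (negl_SS HQ HQ'' neq) => x [_ []].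
apply: neglS (neglU N1 (neglU N2 N3)) => x [/= h SQx].
apply/not_notP => hx; apply: h; rewrite indicE mem_set // !mulr1.
have gc : g Q x <= c'.
  by apply: le_trans cc'; apply/not_notP => h; apply: hx; left.
have H1 n : cst (rlev c' n) x < g Q x -> SS n x.
  move=> lt; apply/not_notP => nS; apply: hx; right; left; exists n => //.
have H2 n : SS n x -> cst (rlev c' n) x < g Q x.
  move=> Sx; apply/not_notP => nE; apply: hx; right; right; exists n => //.
  by split => //; split => // -[].
apply/le_anti/andP; split.
  by apply: lev_le => // n /H2 /ltW.
by apply: lev_ge => // n /H1.
Qed.

Lemma qs_mono (p q : T -> Prop) : (forall x, p x -> q x) -> qs Fam p -> qs Fam q.
Proof.
move=> pq [M [mM [pM HM]]]; exists M; split => //; split => // x nq.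
by apply: pM => /pq.
Qed.

Lemma glue_DC : gluing_property Fam Qs S -> Linf_dedekind_complete Fam.
Proof.
move=> GL A ALinf [f0 Af0] [h0 [Lh0 h0ub]].
have [mf0 [a Ha]] := ALinf f0 Af0; have [mh0 [b Hb]] := Lh0.
pose a' := Num.max a 0; pose b' := Num.max b 0; pose K := b' + a'.
have a'0 : 0 <= a' by rewrite le_max lexx orbT.
have b'0 : 0 <= b' by rewrite le_max lexx orbT.
have aa' : a <= a' by rewrite le_max lexx.
have bb' : b <= b' by rewrite le_max lexx.
have K0 : 0 <= K by rewrite addr_ge0.
have mA f : A f -> measurable_fun setT f by move=> /ALinf [].
have mclip (f : T -> R) : measurable_fun setT f -> measurable_fun setT (fun x => clip a' b' (f x)).
  move=> mf.
  have -> : (fun x => clip a' b' (f x)) = ((f \max cst (- a')) \min cst b') \+ cst a'.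
    by apply/funext.
  apply: measurable_funD => //; apply: measurable_minr => //.
  exact: measurable_maxr.
pose B n (f : T -> R) := [set x | cst (rlev K n) x < clip a' b' (f x)].
have mB n f : A f -> measurable (B n f).
  by move=> Af; apply: mset_lt => //; apply: mclip; exact: mA.
have HJ (Q : probability T R) : exists J : nat -> nat -> T -> R, forall n,
    (forall k, A (J n k)) /\
    (forall f, A f -> Q.-negligible (B n f `\` \bigcup_k B n (J n k))).
  have [J HJ] := choice (fun n => ess_union Q Af0 (mB n)).
  by exists J.
have [JJ HJJ] := choice HJ.
pose D Q n := S Q `&` \bigcup_k B n (JJ Q n k).
have mD Q n : Qs Q -> measurable (D Q n).
  move=> HQ; apply: measurableI; first exact: mS.
  by apply: bigcup_measurable => k _; apply: mB; case: (HJJ Q n) => h _; exact: h.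
pose g Q := lev K (D Q).
have [G0 [LG0 HG0]] : exists g0, Linf Fam g0 /\ forall Q, Qs Q ->
    qs Fam (fun x => g0 x * \1_(S Q) x = g Q x * \1_(S Q) x).
  apply: GL.
  - move=> Q HQ; split; first by apply: lev_meas => // n; exact: mD.
    by move=> x; exact: lev_ge0.
  - by exists K => Q HQ; apply: qs_all => x; exact: lev_lec.
  - move=> Q HQ; apply: qs_all => x nS; apply/le_anti/andP; split; last exact: lev_ge0.
    by apply: lev_le => // n [].
have [mG0 [cG HcG]] := LG0.
pose G := fun x => G0 x - a'.
have GE Q x : Qs Q -> S Q x -> G0 x * \1_(S Q) x = g Q x * \1_(S Q) x -> G x = g Q x - a'.
  by move=> HQ Sx; rewrite indicE mem_set // !mulr1 /G => ->.
exists G; split; [|split].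
- split; first by apply: measurable_funB.
  exists (cG + a'); apply: qs_mono HcG => x h.
  by apply: le_trans (ler_normB _ _) _; rewrite (ger0_norm a'0) lerD2r.
- move=> f Af; have mf := mA f Af.
  apply: (@qs_of _ [set x | G x < f x]).
  + by apply: mset_lt => //; exact: measurable_funB.
  + by move=> x /=; rewrite ltNge => /negP.
  move=> Q HQ.
  have N1 := qs_Q (HG0 Q HQ) HQ.
  have N2 := qs_Q (h0ub f Af) HQ.
  have N3 := qs_Q Hb HQ.
  have N4 : Q.-negligible (\bigcup_n (B n f `\` \bigcup_k B n (JJ Q n k))).
    by apply: negligible_bigcup => n; case: (HJJ Q n) => _ h; exact: h.
  apply: neglS (neglU N1 (neglU N2 (neglU N3 N4))) => x [/= h SQx].
  apply/not_notP => hx; move: h; apply/negP; rewrite -leNgt.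
  rewrite (GE Q x HQ SQx); last by apply/not_notP => h; apply: hx; left.
  have fb : f x <= b'.
    apply: le_trans bb'; apply: le_trans (_ : h0 x <= b).
      by apply/not_notP => h; apply: hx; right; left.
    apply: le_trans (ler_norm _) _.
    by apply/not_notP => h; apply: hx; right; right; left.
  apply: le_trans (@clip_C1 R a' b' (f x) fb) _; rewrite lerD2r.
  apply: lev_ge => //; [exact: clip_ge0 | exact: clip_le |].
  move=> n ltn; split => //; apply/not_notP => nb; apply: hx; right; right; right.
  by exists n => //; split.
- move=> h Lh hub; have [mh _] := Lh.
  apply: (@qs_of _ [set x | h x < G x]).
  + by apply: mset_lt => //; exact: measurable_funB.
  + by move=> x /=; rewrite ltNge => /negP.
  move=> Q HQ.
  have N1 := qs_Q (HG0 Q HQ) HQ.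
  have N5 := qs_Q (hub f0 Af0) HQ.
  have N6 := qs_Q Ha HQ.
  have N7 : Q.-negligible (\bigcup_n \bigcup_k [set x | ~ JJ Q n k x <= h x]).
    apply: negligible_bigcup => n; apply: negligible_bigcup => k.
    by apply: qs_Q HQ; apply: hub; case: (HJJ Q n) => h' _; exact: h'.
  apply: neglS (neglU N1 (neglU N5 (neglU N6 N7))) => x [/= hh SQx].
  apply/not_notP => hx; move: hh; apply/negP; rewrite -leNgt.
  rewrite (GE Q x HQ SQx); last by apply/not_notP => h'; apply: hx; left.
  have ah : - a' <= h x.
    apply: le_trans (_ : f0 x <= h x); last first.
      by apply/not_notP => h'; apply: hx; right; left.
    rewrite lerNl; apply: le_trans aa'; apply: le_trans (_ : `|f0 x| <= a).
      by rewrite -normrN ler_norm.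
    by apply/not_notP => h'; apply: hx; right; right; left.
  rewrite lerBlDr; apply: lev_le; first by rewrite -lerBlDr sub0r.
  move=> n [_ [k _ Bx]]; move: Bx; rewrite /B /= => Bx.
  apply: ltW; apply: lt_le_trans Bx _; rewrite -lerBlDr; apply: clip_C2 => //.
  apply/not_notP => h'; apply: hx; right; right; right.
  by exists n => //; exists k.
Qed.

End Main.

End Helpers.
Import Helpers.

Theorem proposition3p3 (d : measure_display) (T : measurableType d) (R : realType)
  (Fam Qs : set (probability T R)) (S : probability T R -> set T) :
  sigma_convex Fam -> pre_hahn_localizable Fam Qs S ->
  (hahn_localizable Qs S <-> Linf_dedekind_complete Fam) /\
  (Linf_dedekind_complete Fam <-> gluing_property Fam Qs S).
Proof.
move=> _ hP.
have h21 := DC_hahn hP.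
have h13 := hahn_glue hP.
have h32 := glue_DC hP.
split; split => H.
- exact: h32 (h13 H).
- exact: h21 H.
- exact: h13 (h21 H).
- exact: h32 H.
Qed.
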